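(* For every algebra $A$, the anti-rotor $\mathfrak{u}_A$ has dimension at least $1$.
   Context: An ''algebra'' is a real finite-dimensional unital associative algebra with underlying vector space $\mathbb{R}^n$ ($n\ge1$), standard basis, elements column vectors $s=(x_1,\dots,x_n)^T$, $\mathbf{d}s=(dx_1,\dots,dx_n)^T$. An uncurling metric of $A$ is a real symmetric $n\times n$ matrix $L$ with $d\big((s^{-1})^TL\,\mathbf{d}s\big)=0$ on an open ball centered at $\mathbf{1}_A$ consisting only of units; the anti-rotor $\mathfrak{u}_A$ is the real vector space of all uncurling metrics of $A$. *)

(* Defs.v *)
From HB Require Import structures.
From mathcomp Require Import all_boot all_order all_algebra.
From mathcomp Require Import all_classical all_reals all_analysis.
Set Implicit Arguments. Unset Strict Implicit. Unset Printing Implicit Defensive.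
Import Order.TTheory GRing.Theory Num.Theory.
Import numFieldNormedType.Exports.
Local Open Scope ring_scope.

Section Defs.
Variables (R : realType) (n : nat).
Notation V := 'cV[R]_n.

Definition is_algebra (mul : V -> V -> V) (one : V) : Prop :=
  [/\ (forall (a : R) (x y z : V), mul (a *: x + y) z = a *: mul x z + mul y z),
      (forall (a : R) (x y z : V), mul z (a *: x + y) = a *: mul z x + mul z y),
      (forall x y z : V, mul x (mul y z) = mul (mul x y) z),
      (forall x : V, mul one x = x) &
      (forall x : V, mul x one = x)].

Definition eball (c : V) (r : R) : set V :=
  [set s | \sum_(i < n) (s i 0 - c i 0) ^+ 2 < r ^+ 2].

(* The j-th coefficient of the 1-form (s^{-1})^T L ds, given an inverse map. *)
Definition form_coef (inv : V -> V) (L : 'M[R]_n) (j : 'I_n) (s : V) : R :=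
  ((inv s)^T *m L) 0 j.

Definition std_basis (k : 'I_n) : V := delta_mx k 0.

(* L is an uncurling metric: L is symmetric, and on some open ball centred at
   1_A consisting only of units (with inverse map inv), the 1-form
   (s^{-1})^T L ds = sum_j omega_j dx_j is closed, i.e. d omega = 0:
   d_k omega_j = d_j omega_k for all j, k. *)
Definition uncurling_metric (mul : V -> V -> V) (one : V) (L : 'M[R]_n) : Prop :=
  L^T = L /\
  exists r : R, 0 < r /\ exists inv : V -> V,
    (forall s, eball one r s -> mul s (inv s) = one /\ mul (inv s) s = one) /\
    (forall s, eball one r s -> forall j k : 'I_n,
       derivable (form_coef inv L j) s (std_basis k) /\
       'D_(std_basis k) (form_coef inv L j) s =
       'D_(std_basis j) (form_coef inv L k) s).

End Defs.

(* Main.v *)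
Require Import Defs.
From HB Require Import structures.
From mathcomp Require Import all_boot all_order all_algebra.
From mathcomp Require Import all_classical all_reals all_analysis.
From mathcomp Require Import lra.
Import Order.TTheory GRing.Theory Num.Theory.
Import numFieldNormedType.Exports.
Local Open Scope ring_scope.
Local Open Scope classical_set_scope.
Set Implicit Arguments. Unset Strict Implicit.

Lemma lin_expand (R : realType) (n : nat) (f : 'cV[R]_n -> R)
  (lin : forall a x y, f (a *: x + y) = a * f x + f y) (y : 'cV[R]_n) :
  f y = \sum_(b < n) y b 0 * f (std_basis R b).
Proof.
have f0 : f 0 = 0.
  have := lin 1 0 0; rewrite scaler0 addr0 mul1r => /eqP.
  by rewrite -subr_eq subrr eq_sym => /eqP.
have ey : y = \sum_(b < n) y b 0 *: std_basis R b.
  apply/matrixP => i j; rewrite summxE (ord1 j).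
  rewrite (bigD1 i) //= big1 ?addr0; last first.
    by move=> b /negPf hb; rewrite !mxE eq_sym hb mulr0.
  by rewrite !mxE !eqxx mulr1.
rewrite {1}ey; apply: (big_rec2 (fun u w => f u = w)) => // b u w _ <-.
by rewrite lin.
Qed.

Definition Mat (R : realType) (n : nat) (mul : 'cV[R]_n -> 'cV[R]_n -> 'cV[R]_n)
  (x : 'cV[R]_n) : 'M[R]_n := \matrix_(i, j) (mul x (std_basis R j)) i 0.
Definition lam (R : realType) (n : nat) (mul : 'cV[R]_n -> 'cV[R]_n -> 'cV[R]_n)
  (x : 'cV[R]_n) : R := \tr (Mat mul x).
Definition Lmat (R : realType) (n : nat) (mul : 'cV[R]_n -> 'cV[R]_n -> 'cV[R]_n)
  : 'M[R]_n := \matrix_(i, j) lam mul (mul (std_basis R i) (std_basis R j)).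

Lemma mul_Mat (R : realType) (n : nat) (mul : 'cV[R]_n -> 'cV[R]_n -> 'cV[R]_n) one
  (A : is_algebra mul one) x y : mul x y = Mat mul x *m y.
Proof.
case: A => _ Ar _ _ _.
apply/matrixP => i j; rewrite (ord1 j) mxE.
rewrite (@lin_expand R n (fun y => (mul x y) i 0)); last first.
  by move=> a u w; rewrite Ar !mxE.
by apply: eq_bigr => b _; rewrite mxE mulrC.
Qed.

Lemma Mat_lin (R : realType) (n : nat) (mul : 'cV[R]_n -> 'cV[R]_n -> 'cV[R]_n) one
  (A : is_algebra mul one) a x y : Mat mul (a *: x + y) = a *: Mat mul x + Mat mul y.
Proof.
case: A => Al _ _ _ _.
by apply/matrixP => i j; rewrite !mxE Al !mxE.
Qed.

Lemma Mat_mul (R : realType) (n : nat) (mul : 'cV[R]_n -> 'cV[R]_n -> 'cV[R]_n) one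
  (A : is_algebra mul one) x y : Mat mul (mul x y) = Mat mul x *m Mat mul y.
Proof.
have A' := A; case: A' => _ _ As _ _.
apply/matrixP => i j; rewrite !mxE -As (mul_Mat A x) mxE.
by apply: eq_bigr => k _; rewrite [Mat mul y k j]mxE.
Qed.

Lemma Mat_one (R : realType) (n : nat) (mul : 'cV[R]_n -> 'cV[R]_n -> 'cV[R]_n) one
  (A : is_algebra mul one) : Mat mul one = 1%:M.
Proof.
case: A => _ _ _ A1 _.
by apply/matrixP => i j; rewrite !mxE A1 !mxE andbT.
Qed.

Lemma lam_lin (R : realType) (n : nat) (mul : 'cV[R]_n -> 'cV[R]_n -> 'cV[R]_n) one
  (A : is_algebra mul one) a x y : lam mul (a *: x + y) = a * lam mul x + lam mul y.
Proof. by rewrite /lam (Mat_lin A) mxtraceD mxtraceZ. Qed.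

Lemma lam_comm (R : realType) (n : nat) (mul : 'cV[R]_n -> 'cV[R]_n -> 'cV[R]_n) one
  (A : is_algebra mul one) x y : lam mul (mul x y) = lam mul (mul y x).
Proof. by rewrite /lam !(Mat_mul A) mxtrace_mulC. Qed.

Lemma form_eq (R : realType) (n : nat) (mul : 'cV[R]_n -> 'cV[R]_n -> 'cV[R]_n) one
  (A : is_algebra mul one) (x : 'cV[R]_n) j :
  (x^T *m Lmat mul) 0 j = lam mul (mul x (std_basis R j)).
Proof.
have A' := A; case: A' => Al _ _ _ _.
rewrite mxE (@lin_expand R n (fun x => lam mul (mul x (std_basis R j)))); last first.
  by move=> a u w; rewrite Al (lam_lin A).
by apply: eq_bigr => b _; rewrite !mxE.
Qed.

Lemma Lmat_sym (R : realType) (n : nat) (mul : 'cV[R]_n -> 'cV[R]_n -> 'cV[R]_n) one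
  (A : is_algebra mul one) : (Lmat mul)^T = Lmat mul.
Proof. by apply/matrixP => i j; rewrite !mxE (lam_comm A). Qed.

Lemma Lmat_neq0 (R : realType) (n : nat) (mul : 'cV[R]_n -> 'cV[R]_n -> 'cV[R]_n) one
  (A : is_algebra mul one) : (0 < n)%N -> Lmat mul != 0.
Proof.
move=> n0; apply/eqP => L0.
have h : forall j, lam mul (std_basis R j) = 0.
  move=> j; have := form_eq A one j; rewrite L0 mulmx0 mxE.
  by case: A => _ _ _ -> _.
have := @lin_expand R n (lam mul) (lam_lin A) one.
rewrite big1; last by move=> b _; rewrite h mulr0.
rewrite /lam (Mat_one A) mxtrace1 => /eqP.
by rewrite pnatr_eq0 eqn0Ngt n0.
Qed.

Lemma cvg_bsum (R : realType) (T : Type) (F : set_system T) {FF : Filter F}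
  (I : Type) (r : seq I) (P : pred I) (f : I -> T -> R) (l : I -> R) :
  (forall i, P i -> f i @ F --> l i) ->
  (fun t => \sum_(i <- r | P i) f i t) @ F --> \sum_(i <- r | P i) l i.
Proof.
move=> hf; elim: r => [|i r IH].
  rewrite big_nil (_ : (fun _ => _) = cst 0); first exact: cvg_cst.
  by apply/funext => t; rewrite big_nil.
rewrite big_cons (_ : (fun _ => _) = (fun t => (if P i then f i t else 0) +
     \sum_(j <- r | P j) f j t)); last first.
  by apply/funext => t; rewrite big_cons; case: (P i); rewrite ?add0r.
case Pi: (P i) => /=; last first.
  suff -> : (fun t => 0 + \sum_(j <- r | P j) f j t) = (fun t => \sum_(j <- r | P j) f j t) by [].
  by apply/funext => t; rewrite add0r.
exact: cvgD (hf i Pi) IH.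
Qed.

Lemma cvg_bprod (R : realType) (T : Type) (F : set_system T) {FF : Filter F}
  (I : Type) (r : seq I) (P : pred I) (f : I -> T -> R) (l : I -> R) :
  (forall i, P i -> f i @ F --> l i) ->
  (fun t => \prod_(i <- r | P i) f i t) @ F --> \prod_(i <- r | P i) l i.
Proof.
move=> hf; elim: r => [|i r IH].
  rewrite big_nil (_ : (fun _ => _) = cst 1); first exact: cvg_cst.
  by apply/funext => t; rewrite big_nil.
rewrite big_cons (_ : (fun _ => _) = (fun t => (if P i then f i t else 1) *
     \prod_(j <- r | P j) f j t)); last first.
  by apply/funext => t; rewrite big_cons; case: (P i); rewrite ?mul1r.
case Pi: (P i) => /=; last first.
  suff -> : (fun t => 1 * \prod_(j <- r | P j) f j t) = (fun t => \prod_(j <- r | P j) f j t) by [].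
  by apply/funext => t; rewrite mul1r.
exact: cvgM (hf i Pi) IH.
Qed.

Lemma cvg_det (R : realType) (T : Type) (F : set_system T) {FF : Filter F}
  (m : nat) (g : T -> 'M[R]_m) (M : 'M[R]_m) :
  (forall i j, (fun t => g t i j) @ F --> M i j) ->
  (fun t => \det (g t)) @ F --> \det M.
Proof.
move=> hg; rewrite /determinant.
apply: cvg_bsum => s _; apply: cvgM; first exact: cvg_cst.
by apply: cvg_bprod => i _; apply: hg.
Qed.

Lemma cvg_adj (R : realType) (T : Type) (F : set_system T) {FF : Filter F}
  (m : nat) (g : T -> 'M[R]_m) (M : 'M[R]_m) :
  (forall i j, (fun t => g t i j) @ F --> M i j) ->
  forall i j, (fun t => \adj (g t) i j) @ F --> \adj M i j.
Proof.
move=> hg i j; under eq_fun do rewrite mxE /cofactor.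
rewrite mxE /cofactor; apply: cvgM; first exact: cvg_cst.
apply: (@cvg_det R T F FF _ (fun t => row' j (col' i (g t)))) => a b.
rewrite !mxE; under eq_fun do rewrite !mxE.
exact: hg.
Qed.

Definition Finv (R : realType) (n : nat) (mul : 'cV[R]_n -> 'cV[R]_n -> 'cV[R]_n)
  (one : 'cV[R]_n) (s : 'cV[R]_n) : 'cV[R]_n := invmx (Mat mul s) *m one.

Lemma Mat_id (R : realType) (n : nat) (mul : 'cV[R]_n -> 'cV[R]_n -> 'cV[R]_n) one
  (A : is_algebra mul one) x : Mat mul x *m one = x.
Proof. by rewrite -(mul_Mat A); case: A => _ _ _ _ ->. Qed.

Lemma Finv_r (R : realType) (n : nat) (mul : 'cV[R]_n -> 'cV[R]_n -> 'cV[R]_n) one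
  (A : is_algebra mul one) s : Mat mul s \in unitmx -> mul s (Finv mul one s) = one.
Proof. by move=> U; rewrite (mul_Mat A) /Finv mulmxA mulmxV // mul1mx. Qed.

Lemma Mat_Finv (R : realType) (n : nat) (mul : 'cV[R]_n -> 'cV[R]_n -> 'cV[R]_n) one
  (A : is_algebra mul one) s : Mat mul s \in unitmx ->
  Mat mul (Finv mul one s) = invmx (Mat mul s).
Proof.
move=> U; have := Mat_mul A s (Finv mul one s).
rewrite (Finv_r A U) (Mat_one A) => h.
by rewrite -[LHS](mulKmx U) -h mulmx1.
Qed.

Lemma Finv_l (R : realType) (n : nat) (mul : 'cV[R]_n -> 'cV[R]_n -> 'cV[R]_n) one
  (A : is_algebra mul one) s : Mat mul s \in unitmx -> mul (Finv mul one s) s = one.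
Proof.
move=> U; rewrite -(Mat_id A (mul _ s)) (Mat_mul A) (Mat_Finv A U) mulVmx //.
by rewrite mul1mx.
Qed.

Lemma Mat_entry_cvg (R : realType) (n : nat) (mul : 'cV[R]_n -> 'cV[R]_n -> 'cV[R]_n) one
  (A : is_algebra mul one) (a : 'cV[R]_n) i j :
  Mat mul s i j @[s --> a] --> Mat mul a i j.
Proof.
have E : forall s, Mat mul s i j =
    \sum_(b < n) s b 0 * (mul (std_basis R b) (std_basis R j)) i 0.
  move=> s; rewrite mxE (@lin_expand R n (fun s => (mul s (std_basis R j)) i 0)) //.
  by move=> c u w; case: A => -> _ _ _ _; rewrite !mxE.
have -> : (fun s : 'cV[R]_n => Mat mul s i j) = (fun s : 'cV[R]_n => \sum_(b < n) s b 0 *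
   (mul (std_basis R b) (std_basis R j)) i 0) by apply/funext => s; rewrite E.
rewrite E; apply: (cvg_bsum (F := nbhs a)) => b _; apply: cvgM; last exact: cvg_cst.
exact: coord_continuous.
Qed.

Lemma det_cvg (R : realType) (n : nat) (mul : 'cV[R]_n -> 'cV[R]_n -> 'cV[R]_n) one
  (A : is_algebra mul one) (a : 'cV[R]_n) :
  \det (Mat mul s) @[s --> a] --> \det (Mat mul a).
Proof. by apply: (cvg_det (F := nbhs a)) => i j; apply: (Mat_entry_cvg A). Qed.

Lemma Finv_cvg (R : realType) (n : nat) (mul : 'cV[R]_n -> 'cV[R]_n -> 'cV[R]_n) one
  (A : is_algebra mul one) (a : 'cV[R]_n) b : \det (Mat mul a) != 0 ->
  (Finv mul one s) b 0 @[s --> a] --> (Finv mul one a) b 0.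
Proof.
move=> da.
have Q : forall s, \det (Mat mul s) != 0 -> (Finv mul one s) b 0 =
    \sum_(k < n) ((\det (Mat mul s))^-1 * \adj (Mat mul s) b k) * one k 0.
  move=> s ds; rewrite /Finv /invmx unitmxE unitfE ds mxE.
  by apply: eq_bigr => k _; rewrite mxE.
have FF : Filter (nbhs a) := nbhs_filter a.
have hn : \forall s \near a, \det (Mat mul s) != 0 := cvgr_neq0 (FF := FF) _ (det_cvg (a:=a) A) da.
have eqn : \forall s \near a, (\sum_(k < n) ((\det (Mat mul s))^-1 * \adj (Mat mul s) b k) * one k 0) = Finv mul one s b 0.
  by apply: filterS hn => s ds; rewrite Q.
apply: cvg_trans (near_eq_cvg eqn) _.
rewrite Q //; apply: (cvg_bsum (F := nbhs a)) => k _; apply: cvgM; last exact: cvg_cst.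
apply: cvgM; first exact: cvgV (det_cvg (a:=a) A).
by apply: (cvg_adj (F := nbhs a)) => i j; apply: (Mat_entry_cvg A).
Qed.

Lemma mul_basics (R : realType) (n : nat) (mul : 'cV[R]_n -> 'cV[R]_n -> 'cV[R]_n) one
  (A : is_algebra mul one) :
  [/\ (forall c x z, mul (c *: x) z = c *: mul x z),
      (forall x y z, mul (x - y) z = mul x z - mul y z),
      (forall c x z, mul z (c *: x) = c *: mul z x) &
      (forall x y z, mul z (x - y) = mul z x - mul z y)].
Proof.
case: A => Al Ar _ _ _.
have m0l : forall z, mul 0 z = 0.
  move=> z; have := Al 1 0 0 z; rewrite scaler0 addr0 scale1r => /eqP.
  by rewrite -subr_eq subrr eq_sym => /eqP.
have m0r : forall z, mul z 0 = 0.
  move=> z; have := Ar 1 0 0 z; rewrite scaler0 addr0 scale1r => /eqP.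
  by rewrite -subr_eq subrr eq_sym => /eqP.
split.
- by move=> c x z; rewrite -[c *: x]addr0 Al m0l addr0.
- by move=> x y z; rewrite addrC -scaleN1r Al scaleN1r addrC.
- by move=> c x z; rewrite -[c *: x]addr0 Ar m0r addr0.
- by move=> x y z; rewrite addrC -scaleN1r Ar scaleN1r addrC.
Qed.

Lemma lam_basics (R : realType) (n : nat) (mul : 'cV[R]_n -> 'cV[R]_n -> 'cV[R]_n) one
  (A : is_algebra mul one) :
  (forall c x, lam mul (c *: x) = c * lam mul x) /\
  (forall x y, lam mul (x - y) = lam mul x - lam mul y).
Proof.
have l0 : lam mul 0 = 0.
  have := lam_lin A 1 0 0; rewrite scaler0 addr0 mul1r => /eqP.
  by rewrite -subr_eq subrr eq_sym => /eqP.
split.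
- by move=> c x; rewrite -[c *: x]addr0 (lam_lin A) l0 addr0.
- by move=> x y; rewrite addrC -scaleN1r (lam_lin A) mulN1r addrC.
Qed.

Definition omega (R : realType) (n : nat) (mul : 'cV[R]_n -> 'cV[R]_n -> 'cV[R]_n)
  (one : 'cV[R]_n) (j : 'I_n) (s : 'cV[R]_n) : R :=
  lam mul (mul (Finv mul one s) (std_basis R j)).

Lemma Finv_diff (R : realType) (n : nat) (mul : 'cV[R]_n -> 'cV[R]_n -> 'cV[R]_n) one
  (A : is_algebra mul one) (a s : 'cV[R]_n) :
  Mat mul a \in unitmx -> Mat mul s \in unitmx ->
  Finv mul one s - Finv mul one a =
    mul (Finv mul one s) (mul (a - s) (Finv mul one a)).
Proof.
move=> Ua Us.
have [mZl mBl mZr mBr] := mul_basics A.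
have A' := A; case: A' => _ _ As A1 _.
rewrite mBl mBr (Finv_r A Ua) As (Finv_l A Us) A1.
by case: A => _ _ _ _ ->.
Qed.

Lemma deriv_main (R : realType) (n : nat) (mul : 'cV[R]_n -> 'cV[R]_n -> 'cV[R]_n) one
  (A : is_algebra mul one) (a v : 'cV[R]_n) (j : 'I_n) : \det (Mat mul a) != 0 ->
  h^-1 *: ((omega mul one j \o shift a) (h *: v) - omega mul one j a) @[h --> 0^'] -->
  - lam mul (mul (mul (Finv mul one a) (mul v (Finv mul one a))) (std_basis R j)).
Proof.
move=> da.
have [mZl mBl mZr mBr] := mul_basics A.
have [lZ lB] := lam_basics A.
have A' := A; case: A' => Al Ar As _ _.
set Fa := Finv mul one a; set w := mul v Fa.
pose psi := fun y => - lam mul (mul (mul y w) (std_basis R j)).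
have psi_lin : forall c x y, psi (c *: x + y) = c * psi x + psi y.
  by move=> c x y; rewrite /psi !Al (lam_lin A) mulrN opprD.
have FFa : Filter (nbhs a) := nbhs_filter a.
have line : (fun h : R => h *: v + a) @ 0 --> a.
  have : (fun h : R => h *: v + a) @ 0 --> 0 *: v + a.
    apply: cvgD; last exact: cvg_cst.
    by apply: cvgZr_tmp; exact: cvg_id.
  by rewrite scale0r add0r.
have Fb : forall b, (fun h : R => Finv mul one (h *: v + a) b 0) @ 0 --> Fa b 0.
  by move=> b; exact: (cvg_comp _ _ line (Finv_cvg (b:=b) A da)).
pose H := fun h : R => \sum_(b < n) Finv mul one (h *: v + a) b 0 * psi (std_basis R b).
have Hc : H @ 0 --> psi Fa.
  rewrite (lin_expand psi_lin Fa).
  apply: cvg_bsum => b _; apply: cvgM; [exact: Fb | exact: cvg_cst].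
have hnA : \forall s \near a, \det (Mat mul s) != 0 :=
  cvgr_neq0 (FF := FFa) _ (det_cvg (a:=a) A) da.
have hd : \forall h \near (0 : R), \det (Mat mul (h *: v + a)) != 0 := line _ hnA.
have eq0 : \forall h \near 0^', H h = h^-1 *: ((omega mul one j \o shift a) (h *: v) - omega mul one j a).
  apply: filterS hd => h dh h0.
  have Us : Mat mul (h *: v + a) \in unitmx by rewrite unitmxE unitfE.
  have Ua : Mat mul a \in unitmx by rewrite unitmxE unitfE.
  rewrite /H -(lin_expand psi_lin) /= /omega -lB -mBl.
  rewrite (Finv_diff A Ua Us) (_ : a - (h *: v + a) = (- h) *: v); last first.
    by rewrite opprD addrCA subrr addr0 scaleNr.
  rewrite mZl mZr mZl lZ /psi -As.
  by rewrite -[RHS]/(h^-1 * _) mulrA mulrN mulVf // mulN1r.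
apply: cvg_trans (near_eq_cvg eq0) _.
rewrite (_ : - _ = psi Fa) //.
exact: cvg_within_filter Hc.
Qed.

Lemma eball_ball (R : realType) (n : nat) (c s : 'cV[R]_n) (r : R) :
  0 < r -> eball c r s -> ball c r s.
Proof.
move=> r0 hs; split => // i j; rewrite (ord1 j) /ball /=.
have h1 : (s i 0 - c i 0) ^+ 2 < r ^+ 2.
  apply: le_lt_trans hs; rewrite (bigD1 i) //= lerDl.
  by apply: sumr_ge0 => k _; exact: sqr_ge0.
have h2 : `|c i 0 - s i 0| ^+ 2 < r ^+ 2 by rewrite real_normK ?num_real // -sqrrN opprB.
have h3 : 0 <= `|c i 0 - s i 0| by [].
move: h2 h3; rewrite !expr2; set d := `|_|; move=> h2 h3.
nra.
Qed.

Local Close Scope classical_set_scope.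

Theorem corollary8p4 (R : realType) (n : nat)
    (mul : 'cV[R]_n -> 'cV[R]_n -> 'cV[R]_n) (one : 'cV[R]_n) :
  (0 < n)%N -> is_algebra mul one ->
  exists L : 'M[R]_n, L != 0 /\ uncurling_metric mul one L.
Proof.
move=> n0 A; exists (Lmat mul); split; first exact: Lmat_neq0 A n0.
split; first exact: Lmat_sym A.
have FF1 : Filter (nbhs one) := nbhs_filter one.
have d1 : \det (Mat mul one) != 0 by rewrite (Mat_one A) det1 oner_neq0.
have hn : \forall s \near one, \det (Mat mul s) != 0 :=
  cvgr_neq0 (FF := FF1) _ (det_cvg (a:=one) A) d1.
have [r r0 hr] := (iffLR (nbhs_ballP one _) hn).
exists r; split => //; exists (Finv mul one).
have formE : forall j, form_coef (Finv mul one) (Lmat mul) j = omega mul one j.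
  by move=> j; apply/funext => s; rewrite /form_coef (form_eq A).
have ds : forall s, eball one r s -> \det (Mat mul s) != 0.
  by move=> s /(eball_ball r0) /hr.
split.
  move=> s /ds dS; have U : Mat mul s \in unitmx by rewrite unitmxE unitfE.
  by split; [apply: (Finv_r A) | apply: (Finv_l A)].
move=> s /ds dS j k; rewrite !formE.
have Dk := deriv_main (v:=std_basis R k) (j:=j) A dS.
have Dj := deriv_main (v:=std_basis R j) (j:=k) A dS.
split; first exact: cvgP Dk.
rewrite /derive (cvg_lim _ Dk).
have A' := A; case: A' => _ _ As _ _.
set F := Finv mul one s.
have key : forall p q, mul (mul F (mul (std_basis R p) F)) (std_basis R q) =
    mul (mul F (std_basis R p)) (mul F (std_basis R q)).
  by move=> p q; rewrite As -As.
have EV : - lam mul (mul (mul F (mul (std_basis R k) F)) (std_basis R j)) =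
          - lam mul (mul (mul F (mul (std_basis R j) F)) (std_basis R k)).
  by rewrite !key (lam_comm A).
rewrite EV.
apply/esym/cvg_lim => //.
exact: norm_hausdorff.
Qed.
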